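(* Let $(M,d,0_M)$ be an unbounded pointed metric space, $(N,d,0_N)$ any pointed metric space and $f\colon M\to N$ any map. Suppose $f$ satisfies: $(P_3)$ for every sequence $(x_n,y_n)_n$ in $M\times M$ with $x_n\ne y_n$ and $\lim_n d(x_n,0_M)=\lim_n d(y_n,0_M)=\infty$, either $(f(x_n),f(y_n))_n$ has an accumulation point in $N\times N$, or $\liminf_{n\to\infty}\frac{d(f(x_n),f(y_n))}{d(x_n,y_n)}=0$. Then $f$ is radially flat, i.e. $$\lim_{d(x,0_M)\to\infty}\frac{d(f(x),0_N)}{d(x,0_M)}=0.$$ *)

(* Defs.v *)
From Stdlib Require Import Reals.
From Coquelicot Require Import Coquelicot.
Open Scope R_scope.

Definition unbounded (M : Metric_Space) (o : Base M) : Prop :=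
  forall r : R, exists x : Base M, dist M x o > r.

(* (a,b) is an accumulation (cluster) point of the sequence (u_n, v_n)_n in
   N x N (product topology, i.e. max-metric): every neighbourhood is visited
   infinitely often. *)
Definition is_accumulation_point2 (N : Metric_Space)
  (u v : nat -> Base N) (a b : Base N) : Prop :=
  forall eps : R, eps > 0 -> forall n0 : nat, exists n : nat,
    (n0 <= n)%nat /\ dist N (u n) a < eps /\ dist N (v n) b < eps.

Definition has_accumulation_point2 (N : Metric_Space)
  (u v : nat -> Base N) : Prop :=
  exists a b : Base N, is_accumulation_point2 N u v a b.

Definition P3 (M N : Metric_Space) (oM : Base M) (oN : Base N)
  (f : Base M -> Base N) : Prop :=
  forall x y : nat -> Base M,
    (forall n, x n <> y n) ->
    is_lim_seq (fun n => dist M (x n) oM) p_infty ->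
    is_lim_seq (fun n => dist M (y n) oM) p_infty ->
    has_accumulation_point2 N (fun n => f (x n)) (fun n => f (y n))
    \/ LimInf_seq (fun n => dist N (f (x n)) (f (y n)) / dist M (x n) (y n))
         = Finite 0.

Definition radially_flat (M N : Metric_Space) (oM : Base M) (oN : Base N)
  (f : Base M -> Base N) : Prop :=
  forall eps : R, eps > 0 -> exists r : R, forall x : Base M,
    dist M x oM > r -> Rabs (dist N (f x) oN / dist M x oM) < eps.

(* Main.v *)
Require Import Defs.
From Stdlib Require Import Reals.
From Coquelicot Require Import Coquelicot.
From Stdlib Require Import Classical ClassicalEpsilon Lra Lia.
Open Scope R_scope.

Fixpoint seqb {A : Type} (g : R -> A) (h : A -> R) (n : nat) : A :=
  match n with
  | O => g 0
  | S k => g (INR (k + 2) * h (seqb g h k) + INR k)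
  end.

Lemma ratio_ge (a b e : R) : a > 0 -> e > 0 -> Rabs (b / a) >= e -> b >= 0 -> b >= e * a.
Proof.
  intros Ha He Hr Hb.
  assert (Hq : 0 <= b / a) by (apply Rdiv_le_0_compat; lra).
  rewrite Rabs_right in Hr by lra.
  assert (E : b = (b / a) * a) by (field; lra).
  rewrite E. nra.
Qed.

Theorem lemma2p4 (M N : Metric_Space) (oM : Base M) (oN : Base N)
  (f : Base M -> Base N) :
  unbounded M oM -> P3 M N oM oN f -> radially_flat M N oM oN f.
Proof.
  intros _ HP.
  apply NNPP; intro Hnf.
  apply not_all_ex_not in Hnf as [e He].
  apply imply_to_and in He as [He Hne].
  assert (Hx : forall r : R, exists x : Base M,
    dist M x oM > r /\ Rabs (dist N (f x) oN / dist M x oM) >= e).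
  { intro r. apply Classical_Pred_Type.not_ex_all_not with (n := r) in Hne.
    apply not_all_ex_not in Hne as [x Hx].
    apply imply_to_and in Hx as [H1 H2].
    exists x; split; [exact H1| apply Rnot_lt_ge; exact H2]. }
  set (g := fun r => proj1_sig (constructive_indefinite_description _ (Hx r))).
  assert (Hg : forall r, dist M (g r) oM > r /\
     Rabs (dist N (f (g r)) oN / dist M (g r) oM) >= e).
  { intro r. unfold g. destruct (constructive_indefinite_description _ (Hx r)); auto. }
  set (h := fun x => dist M x oM + dist N (f x) oN).
  set (s := seqb g h).
  assert (Hpos : forall k, dist M (s k) oM >= 0) by (intro; apply dist_pos).
  assert (HposN : forall k, dist N (f (s k)) oN >= 0) by (intro; apply dist_pos).
  assert (Hs : forall k, dist M (s (S k)) oM > INR (k + 2) * h (s k) + INR k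
     /\ dist N (f (s (S k))) oN >= e * dist M (s (S k)) oM).
  { intro k. assert (Ek : s (S k) = g (INR (k + 2) * h (s k) + INR k)) by reflexivity.
    rewrite Ek. destruct (Hg (INR (k + 2) * h (s k) + INR k)) as [H1 H2].
    split; [exact H1|]. apply ratio_ge; auto.
    - pose proof (pos_INR k). pose proof (pos_INR (k+2)).
      unfold h in *. pose proof (Hpos k). pose proof (HposN k).
      assert (0 <= INR (k+2) * (dist M (s k) oM + dist N (f (s k)) oN)) by (apply Rmult_le_pos; lra).
      lra.
    - apply dist_pos. }
  assert (Hgrow : forall k, dist M (s (S k)) oM > INR k).
  { intro k. destruct (Hs k) as [H1 _].
    assert (0 <= INR (k + 2) * h (s k)).
    { apply Rmult_le_pos; [apply pos_INR|]. unfold h. pose proof (Hpos k); pose proof (HposN k); lra. }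
    lra. }
  assert (Hdist : forall n, s (S (S n)) <> s (S n)).
  { intro n. intro Heq.
    destruct (Hs (S n)) as [H1 _]. rewrite Heq in H1.
    assert (INR (S n + 2) >= 2). { assert (INR 2 <= INR (S n + 2)) by (apply le_INR; lia). replace (INR 2) with 2 in H by (simpl; lra). lra. }
    unfold h in H1. pose proof (Hpos (S n)); pose proof (HposN (S n)); pose proof (pos_INR (S n)).
    nra. }
  destruct (HP (fun n => s (S (S n))) (fun n => s (S n))) as [Hacc | Hli].
  - exact Hdist.
  - apply is_lim_seq_le_p_loc with (u := INR); [|apply is_lim_seq_INR].
    exists O; intros n _. pose proof (Hgrow (S n)). rewrite S_INR in H. lra.
  - apply is_lim_seq_le_p_loc with (u := INR); [|apply is_lim_seq_INR].
    exists O; intros n _. pose proof (Hgrow n). lra.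
  - destruct Hacc as [a [b Hab]].
    destruct (INR_unbounded ((1 + dist N a oN) / e)) as [n0 Hn0].
    destruct (Hab 1 Rlt_0_1 n0) as [n [Hn [Ha _]]].
    simpl in Ha.
    destruct (Hs (S n)) as [_ H2].
    pose proof (Hgrow (S n)).
    assert (INR n0 <= INR (S n)) by (apply le_INR; lia).
    pose proof (dist_tri N (f (s (S (S n)))) oN a).
    assert (E : (1 + dist N a oN) / e * e = 1 + dist N a oN) by (field; lra).
    rewrite (dist_sym N a oN) in *.
    nra.
  - destruct (INR_unbounded (2 / e + 1)) as [N0 HN0].
    assert (Hev : eventually (fun n => e / 2 <=
       dist N (f (s (S (S n)))) (f (s (S n))) / dist M (s (S (S n))) (s (S n)))).
    { exists N0. intros n Hn.
      set (X := dist M (s (S (S n))) oM).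
      set (a := dist M (s (S n)) oM).
      set (b := dist N (f (s (S n))) oN).
      set (FX := dist N (f (s (S (S n)))) oN).
      set (D := dist N (f (s (S (S n)))) (f (s (S n)))).
      set (d := dist M (s (S (S n))) (s (S n))).
      set (K := INR (S n + 2)).
      destruct (Hs (S n)) as [H1 H2]. fold X K a b FX in H1, H2.
      unfold h in H1. fold a b in H1.
      assert (Hd : d > 0).
      { destruct (dist_pos M (s (S (S n))) (s (S n))) as [Hp|Hp]; [exact Hp|].
        exfalso. apply (Hdist n). apply (dist_refl M). exact Hp. }
      assert (HD : FX <= D + b).
      { unfold FX, D, b. apply dist_tri. }
      assert (Hdd : d <= X + a).
      { unfold d, X, a. rewrite (dist_sym M (s (S n)) oM). apply dist_tri. }
      assert (HK : K > 2 / e + 1).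
      { assert (INR N0 <= K) by (unfold K; apply le_INR; lia). lra. }
      assert (HeK : e * K >= 2 + e).
      { assert (E : e * (2 / e) = 2) by (field; lra). nra. }
      pose proof (Hpos (S n)) as Ha. pose proof (HposN (S n)) as Hb. fold a in Ha. fold b in Hb.
      pose proof (pos_INR (S n)).
      assert (HX : X >= K * (a + b)) by lra.
      assert (HeX : e * X >= (e * K) * (a + b)) by nra.
      assert (H3 : (e * K) * (a + b) >= (2 + e) * (a + b)) by nra.
      assert (Hmain : e / 2 * d <= D) by nra.
      apply Rmult_le_reg_r with d; [lra|].
      assert (E : D / d * d = D) by (field; lra). rewrite E. exact Hmain. }
    pose proof (LimInf_le _ _ Hev) as HL.
    rewrite LimInf_seq_const, Hli in HL. simpl in HL. lra.
Qed.
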